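(* Let $\kappa$ be an infinite cardinal, $(G,f)\in\mathcal C$ with $G=(V,E)$ and $|V|=\kappa^+$. Then $G$ possesses a perfect $f$-factor if and only if there is an increasing continuous sequence $(A_\alpha)_{\alpha<\kappa^+}$ of subsets of $V$ such that (i) $A_0=\emptyset$ and $V=\bigcup_{\alpha<\kappa^+}A_\alpha$; (ii) $|A_{\alpha+1}\setminus A_\alpha|=\kappa$ for all $\alpha<\kappa^+$; (iii) for every $\alpha<\kappa^+$, letting $B_\alpha=A_{\alpha+1}\setminus(A_\alpha\setminus f^{-1}(\kappa^+))$ and $g_\alpha=f\restriction B_\alpha$, the graph $\bigl(B_\alpha,\{\{x,y\}\in E: x\in B_\alpha,\ y\in A_{\alpha+1}\setminus A_\alpha\}\bigr)$ has a $\kappa$-perfect $g_\alpha$-factor.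
   Context: A graph is $G=(V,E)$ with $V$ a nonempty set and $E\subseteq\{e\subseteq V:|e|=2\}$. For $F\subseteq E$ and $x\in V$, $d_F(x)$ is the cardinal $|\{e\in F:x\in e\}|$. For $f:V\to$ Cardinals, an $f$-factor of $G$ is $F\subseteq E$ with $d_F(x)\le f(x)$ for all $x$; it is perfect if $d_F(x)=f(x)$ for all $x$; $f^{-1}(\lambda)=\{x\in V:f(x)=\lambda\}$. For an infinite cardinal $\kappa$, an $f$-factor $F$ is $\kappa$-perfect if $d_F(x)=f(x)$ for all $x$ with $f(x)\le\kappa$ and $d_F(x)>0$ for all $x$ with $f(x)>\kappa$. $\mathcal C$ is the class of all pairs $(G,f)$ with $G=(V,E)$ a graph, $f:V\to$ Cardinals, and $f(x)\le d_E(x)$ for all $x\in V$. A sequence $(A_\alpha)_{\alpha<\kappa^+}$ is increasing continuous if $A_\alpha\subseteq A_\beta$ for $\alpha<\beta$ and $A_\lambda=\bigcup_{\alpha<\lambda}A_\alpha$ for limit $\lambda$. *)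

(* Defs.v *)
From mathcomp Require Import all_boot all_order.
From mathcomp Require Import boolp classical_sets functions cardinality.
Set Implicit Arguments. Unset Strict Implicit. Unset Printing Implicit Defensive.
Local Open Scope classical_set_scope.
Local Open Scope card_scope.

(* A cardinal is represented by a set (of any type); cardinals are compared
   with #<= and #= (existence of an injection / a bijection). *)

Definition is_edge (V : Type) (e : set V) := exists x y : V, x <> y /\ e = [set x; y].

Definition graph (V : Type) (E : set (set V)) :=
  (exists x : V, True) /\ forall e, E e -> is_edge e.

(* the set {e in F : x in e}; d_F(x) is its cardinal *)
Definition inc (V : Type) (F : set (set V)) (x : V) : set (set V) :=
  [set e | F e /\ e x].

Definition classC (V C : Type) (E : set (set V)) (f : V -> set C) :=
  graph E /\ forall x, f x #<= inc E x.

Definition factor (V C : Type) (B : set V) (E : set (set V)) (f : V -> set C)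
  (F : set (set V)) :=
  F `<=` E /\ forall x, B x -> inc F x #<= f x.

Definition perfect_factor (V C : Type) (B : set V) (E : set (set V))
  (f : V -> set C) (F : set (set V)) :=
  factor B E f F /\ forall x, B x -> inc F x #= f x.

(* kappa-perfect f-factor, kappa = |K| *)
Definition kperfect_factor (V C K : Type) (B : set V) (E : set (set V))
  (f : V -> set C) (F : set (set V)) :=
  factor B E f F /\
  forall x, B x ->
    (f x #<= [set: K] -> inc F x #= f x) /\
    (~ (f x #<= [set: K]) -> inc F x !=set0).

(* |L| = |K|^+ : K injects into L, L does not inject into K, and every subset
   of L has cardinality <= |K| or = |L|. *)
Definition is_succ_card (K L : Type) :=
  [set: K] #<= [set: L] /\ ~ ([set: L] #<= [set: K]) /\
  forall S : set L, S #<= [set: K] \/ S #= [set: L].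

Definition strict_wellorder (I : Type) (lt : I -> I -> Prop) :=
  (forall a, ~ lt a a) /\ (forall a b c, lt a b -> lt b c -> lt a c) /\
  (forall a b, lt a b \/ a = b \/ lt b a) /\ well_founded lt.

(* (I, lt) has order type the initial ordinal kappa^+ (= |L| where L is the
   successor cardinal of K): |I| = |L| and every proper initial segment has
   cardinality <= kappa. *)
Definition ordinal_succ_card (K L I : Type) (lt : I -> I -> Prop) :=
  strict_wellorder lt /\ [set: I] #= [set: L] /\
  forall i, [set j | lt j i] #<= [set: K].

Definition is_least (I : Type) (lt : I -> I -> Prop) (z : I) := forall a, a <> z -> lt z a.
Definition is_succ_of (I : Type) (lt : I -> I -> Prop) (a b : I) :=
  lt a b /\ forall c, lt a c -> c = b \/ lt b c.
Definition is_limit (I : Type) (lt : I -> I -> Prop) (l : I) :=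
  ~ is_least lt l /\ ~ (exists a, is_succ_of lt a l).

Definition increasing_continuous (V I : Type) (lt : I -> I -> Prop) (A : I -> set V) :=
  (forall a b, lt a b -> A a `<=` A b) /\
  (forall l, is_limit lt l -> A l = \bigcup_(a in [set a | lt a l]) A a).

(* Main.v *)
Require Import Defs.
From mathcomp Require Import all_boot all_order.
From mathcomp Require Import boolp classical_sets functions cardinality.
Set Implicit Arguments. Unset Strict Implicit. Unset Printing Implicit Defensive.
Local Open Scope classical_set_scope.
Local Open Scope card_scope.

Definition inj_on T U (A : set T) (f : T -> U) :=
  forall x y, A x -> A y -> f x = f y -> x = y.
Definition cle T U (A : set T) (B : set U) :=
  A = set0 \/ exists f : T -> U, (forall x, A x -> B (f x)) /\ inj_on A f.

Lemma cleP T U (A : set T) (B : set U) : A #<= B <-> cle A B.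
Proof.
elim/Ppointed: U => U in B *.
  rewrite card_le_emptyr; split.
    by move/eqP=> ->; left.
  case=> [->|[f [hf _]]]; first by apply/eqP.
  apply/eqP/seteqP; split=> // x Ax; have := hf x Ax; by rewrite (empty_eq0 B).
split.
  move/pcard_leP/injfunPex => [f hf hi]; right; exists f; split=> //.
  by move=> x y Ax Ay; apply: hi; rewrite inE.
case=> [->|[f [hf hi]]]; first exact: card_ge0.
apply/pcard_leP/injfunPex; exists f => //.
by move=> x y; rewrite !inE => Ax Ay; apply: hi.
Qed.

Lemma cle_refl T (A : set T) : cle A A.
Proof. by right; exists id; split=> // x y. Qed.

Lemma cle_sub T (A B : set T) : A `<=` B -> cle A B.
Proof. by move=> AB; right; exists id; split=> // x y. Qed.

Lemma cle_trans T U W (A : set T) (B : set U) (C : set W) :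
  cle A B -> cle B C -> cle A C.
Proof.
case=> [->|[f [fAB fi]]]; first by left.
case=> [B0|[g [gBC gi]]].
  left; apply/seteqP; split=> // x Ax; have := fAB x Ax; by rewrite B0.
right; exists (g \o f); split=> [x Ax|x y Ax Ay /= e]; first exact/gBC/fAB.
exact/fi/gi/e/fAB/Ay/fAB.
Qed.

Lemma cle_image T U (A : set T) (f : T -> U) : cle (f @` A) A.
Proof. exact/cleP/card_image_le. Qed.

Lemma cle_image_inj T U (A : set T) (f : T -> U) : inj_on A f -> cle A (f @` A).
Proof. by move=> fi; right; exists f; split=> // x Ax; exists x. Qed.

Definition ceq T U (A : set T) (B : set U) := cle A B /\ cle B A.

Lemma ceqP T U (A : set T) (B : set U) : A #= B <-> ceq A B.
Proof. by rewrite card_eqPle !cleP. Qed.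

Lemma ceq_sym T U (A : set T) (B : set U) : ceq A B -> ceq B A.
Proof. by case. Qed.

Lemma ceq_trans T U W (A : set T) (B : set U) (C : set W) :
  ceq A B -> ceq B C -> ceq A C.
Proof. by case=> h1 h2 [h3 h4]; split; apply: cle_trans; eauto. Qed.


Record pinj T U (A : set T) (B : set U) := PInj {
  pdom : set T; pfun : T -> U; pdomA : pdom `<=` A;
  pfunB : forall x, pdom x -> B (pfun x); pinjP : inj_on pdom pfun }.

Lemma cle_total T U (A : set T) (B : set U) : cle A B \/ cle B A.
Proof.
case: (pselect (A = set0)) => [->|An0]; first by left; left.
case: (pselect (B = set0)) => [->|Bn0]; first by right; left.
have [b Bb] : exists b, B b by apply/set0P/eqP.
pose R (p q : pinj A B) :=
  `[< pdom p `<=` pdom q /\ forall x, pdom p x -> pfun p x = pfun q x >].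
have t0 : pinj A B.
  by apply: (@PInj _ _ A B set0 (fun _ => b)).
have [m mmax] : exists m, premaximal R m.
  apply: (@ZL_preorder _ t0 R).
  - by move=> p; apply/asboolP; split.
  - move=> p q r /asboolP[pq epq] /asboolP[qr eqr]; apply/asboolP; split.
      exact: subset_trans qr.
    by move=> x px; rewrite epq // eqr //; apply: pq.
  move=> Ch Cht.
  pose D := \bigcup_(p in Ch) pdom p.
  have pick : forall x, {p : pinj A B | D x -> Ch p /\ pdom p x}.
    move=> x; apply: cid; case: (pselect (D x)) => [[p Chp px]|nD].
      by exists p.
    by exists t0.
  pose h x := pfun (sval (pick x)) x.
  have hE : forall p x, Ch p -> pdom p x -> h x = pfun p x.
    move=> p x Chp px; rewrite /h; case: (pick x) => q /= /(_ (ex_intro2 _ _ p Chp px)) [Chq qx].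
    have [/asboolP[_ e]|/asboolP[_ e]] := Cht _ _ Chq Chp.
      exact: e.
    by rewrite e.
  have DA : D `<=` A by move=> x [p _ px]; apply: pdomA px.
  have hB : forall x, D x -> B (h x).
    by move=> x [p Chp px]; rewrite (hE p) //; apply: pfunB.
  have hi : inj_on D h.
    move=> x y [p Chp px] [q Chq qy].
    rewrite (hE p) // (hE q) //.
    have [/asboolP[pq e]|/asboolP[qp e]] := Cht _ _ Chp Chq.
      by rewrite e // => exy; apply: (pinjP (pq _ px) qy exy).
    by rewrite (e y qy) => exy; apply: (pinjP px (qp _ qy) exy).
  exists (PInj DA hB hi) => p Chp; apply/asboolP; split => /=.
    by move=> x px; exists p.
  by move=> x px; rewrite (hE p).
case: (pselect (A `<=` pdom m)) => [Am|nAm].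
  left; right; exists (pfun m); split; first by move=> x /Am; apply: pfunB.
  by move=> x y /Am xm /Am ym; apply: pinjP.
case: (pselect (B `<=` pfun m @` pdom m)) => [Bm|nBm].
  right; apply: cle_trans (cle_sub Bm) _.
  apply: cle_trans (cle_image _ _) _; exact: cle_sub (pdomA (p:=m)).
exfalso.
have [a [Aa na]] : exists a, A a /\ ~ pdom m a.
  by apply: contra_notP nAm => h x Ax; apply: contra_notP h => nx; exists x.
have [c [Bc nc]] : exists c, B c /\ ~ (pfun m @` pdom m) c.
  by apply: contra_notP nBm => h x Bx; apply: contra_notP h => nx; exists x.
pose D' := pdom m `|` [set a].
pose h' x := if `[< x = a >] then c else pfun m x.
have D'A : D' `<=` A by move=> x [/(pdomA (p:=m))|->].
have h'B : forall x, D' x -> B (h' x).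
  move=> x [mx|->]; rewrite /h'.
    by rewrite asboolF; [apply: pfunB|move=> xa; apply: na; rewrite -xa].
  by rewrite asboolT.
have h'i : inj_on D' h'.
  move=> x y; rewrite /h'.
  case: (pselect (x = a)) => [->|xa]; case: (pselect (y = a)) => [->|ya] //.
  - rewrite (asboolT (erefl a)) (asboolF ya) => _ [my|//] e; exfalso; apply: nc.
    by exists y.
  - rewrite (asboolT (erefl a)) (asboolF xa) => [[mx|//]] _ e; exfalso; apply: nc.
    by exists x.
  - rewrite !asboolF // => [[mx|//]] [my|//]; exact: pinjP mx my.
have := mmax (PInj D'A h'B h'i).
have -> : R m (PInj D'A h'B h'i).
  apply/asboolP; split=> /=; first by move=> x mx; left.
  by move=> x mx; rewrite /h' asboolF // => xa; apply: na; rewrite -xa.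
move=> /(_ isT) /asboolP[/= sub _]; apply: na; apply: sub; by right.
Qed.


Record hobj K (k1 k2 k3 : K) := HObj {
  hA : set K; hg : K -> K -> K; hk : hA k1 /\ hA k2 /\ hA k3;
  hgA : forall x y, hA x -> hA y -> hA (hg x y);
  hgi : forall x y x' y', hA x -> hA y -> hA x' -> hA y' ->
     hg x y = hg x' y' -> x = x' /\ y = y' }.

Lemma nat_emb K : infinite_set [set: K] ->
  exists i : nat -> K, forall m n, i m = i n -> m = n.
Proof.
move=> /infiniteP /cleP [/(congr1 (fun S => S 0%N))|[i [_ ii]]].
  by move=> e; exfalso; have : [set: nat] 0%N by []; rewrite e.
by exists i => m n; apply: ii.
Qed.

Lemma hessenberg K : infinite_set [set: K] ->
  exists p : K -> K -> K, forall a b c d, p a b = p c d -> a = c /\ b = d.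
Proof.
move=> Kinf; have [i ii] := nat_emb Kinf.
pose k1 := i 0%N; pose k2 := i 1%N; pose k3 := i 2%N.
have k12 : k1 <> k2 by move/ii.
have k13 : k1 <> k3 by move/ii.
have k23 : k2 <> k3 by move/ii.
have iinv : forall x : K, {n : nat | (exists m, i m = x) -> i n = x}.
  move=> x; apply: cid; case: (pselect (exists m, i m = x)) => [[m e]|ne].
    by exists m.
  by exists 0%N.
pose inv x := sval (iinv x).
have invK : forall n, inv (i n) = n.
  by move=> n; apply: ii; rewrite /inv; case: (iinv (i n)) => m /= ->; [|exists n].
pose A0 := range i.
pose g0 x y := i (pickle (inv x, inv y)).
have t0 : hobj k1 k2 k3.
  apply: (@HObj _ _ _ _ A0 g0).
  - by split; [exists 0%N|split; [exists 1%N|exists 2%N]].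
  - by move=> x y _ _; exists (pickle (inv x, inv y)).
  move=> _ _ _ _ [x _ <-] [y _ <-] [x' _ <-] [y' _ <-].
  rewrite /g0 !invK => /ii /(pcan_inj pickleK_inv) [-> ->]; by [].
pose R (p q : hobj k1 k2 k3) :=
  `[< hA p `<=` hA q /\ forall x y, hA p x -> hA p y -> hg p x y = hg q x y >].
have [m mmax] : exists m, premaximal R m.
  apply: (@ZL_preorder _ t0 R).
  - by move=> p; apply/asboolP; split.
  - move=> p q r /asboolP[pq epq] /asboolP[qr eqr]; apply/asboolP; split.
      exact: subset_trans qr.
    by move=> x y px py; rewrite epq // eqr //; apply: (pq).
  move=> Ch Cht.
  case: (pselect (Ch = set0)) => [->|Chn0].
    by exists t0.
  have [c0 Chc0] : exists c, Ch c by apply/set0P/eqP.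
  pose D := \bigcup_(p in Ch) hA p.
  have pick : forall x y, {p : hobj k1 k2 k3 |
      (exists2 q, Ch q & hA q x /\ hA q y) -> Ch p /\ hA p x /\ hA p y}.
    move=> x y; apply: cid.
    case: (pselect (exists2 q, Ch q & hA q x /\ hA q y)) => [[p Chp px]|nD].
      by exists p.
    by exists t0.
  pose h x y := hg (sval (pick x y)) x y.
  have hE : forall p x y, Ch p -> hA p x -> hA p y -> h x y = hg p x y.
    move=> p x y Chp px py; rewrite /h; case: (pick x y) => q /=.
    move=> /(_ (ex_intro2 _ _ p Chp (conj px py))) [Chq [qx qy]].
    have [/asboolP[_ e]|/asboolP[_ e]] := Cht _ _ Chq Chp.
      exact: e.
    by rewrite e.
  have both : forall x y, D x -> D y -> exists2 p, Ch p & hA p x /\ hA p y.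
    move=> x y [p Chp px] [q Chq qy].
    have [/asboolP[pq _]|/asboolP[qp _]] := Cht _ _ Chp Chq.
      by exists q => //; split => //; apply: (pq).
    by exists p => //; split => //; apply: (qp).
  have Dk : D k1 /\ D k2 /\ D k3.
    by have [? [? ?]] := hk c0; split; [|split]; exists c0.
  have hD : forall x y, D x -> D y -> D (h x y).
    move=> x y Dx Dy; have [p Chp [px py]] := both _ _ Dx Dy.
    by rewrite (hE p) //; exists p => //; apply: hgA.
  have hi : forall x y x' y', D x -> D y -> D x' -> D y' ->
     h x y = h x' y' -> x = x' /\ y = y'.
    move=> x y x' y' Dx Dy Dx' Dy'.
    have [p Chp [px py]] := both _ _ Dx Dy.
    have [q Chq [qx qy]] := both _ _ Dx' Dy'.
    rewrite (hE p) // (hE q) //.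
    have [/asboolP[pq e]|/asboolP[qp e]] := Cht _ _ Chp Chq.
      by rewrite e //; apply: hgi => //; apply: (pq).
    by rewrite (e x' y') //; apply: hgi => //; apply: (qp).
  exists (HObj Dk hD hi) => p Chp; apply/asboolP; split => /=.
    by move=> x px; exists p.
  by move=> x y px py; rewrite (hE p).
set A := hA m; set g := hg m.
have [Ak1 [Ak2 Ak3]] : A k1 /\ A k2 /\ A k3 := hk m.
have gA : forall x y, A x -> A y -> A (g x y) := @hgA _ _ _ _ m.
have gi : forall x y x' y', A x -> A y -> A x' -> A y' ->
     g x y = g x' y' -> x = x' /\ y = y' := @hgi _ _ _ _ m.
have ncle : ~ cle A (~` A).
  case=> [Ae|[h [hA hi]]].
    by move: Ak1; rewrite Ae.
  have hinv : forall x : K, {y : K | (h @` A) x -> A y /\ h y = x}.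
    move=> x; apply: cid; case: (pselect ((h @` A) x)) => [[y Ay e]|nx].
      by exists y.
    by exists x.
  pose hi' x := sval (hinv x).
  have hi'P : forall x, (h @` A) x -> A (hi' x) /\ h (hi' x) = x.
    by move=> x; rewrite /hi'; case: (hinv x).
  pose a x := if `[< A x >] then x else hi' x.
  pose tag x y := if `[< A x >] then k1 else if `[< A y >] then k2 else k3.
  pose A' := A `|` h @` A.
  have aA : forall x, A' x -> A (a x).
    move=> x; rewrite /a; case: (pselect (A x)) => [Ax _|nAx [//|Bx]].
      by rewrite asboolT.
    by rewrite asboolF //; case: (hi'P x Bx).
  have tagA : forall x y, A (tag x y).
    by move=> x y; rewrite /tag; case: ifP => _ //; case: ifP.
  pose g' x y := if `[< A x /\ A y >] then g x y
                 else h (g (g (a x) (a y)) (tag x y)).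
  have BnA : forall x, (h @` A) x -> ~ A x.
    by move=> _ [y Ay <-]; apply: (hA).
  have g'A : forall x y, A' x -> A' y -> A' (g' x y).
    move=> x y A'x A'y; rewrite /g'; case: (pselect (A x /\ A y)) => [[Ax Ay]|nxy].
      by rewrite asboolT //; left; apply: (gA).
    rewrite asboolF //; right; exists (g (g (a x) (a y)) (tag x y)) => //.
    by apply: (gA) => //; apply: (gA); apply: (aA).
  have newi : forall x y x' y', A' x -> A' y -> A' x' -> A' y' ->
      ~ (A x /\ A y) -> ~ (A x' /\ A y') ->
      h (g (g (a x) (a y)) (tag x y)) = h (g (g (a x') (a y')) (tag x' y')) ->
      x = x' /\ y = y'.
    move=> x y x' y' A'x A'y A'x' A'y' nxy nxy' e.
    have ax := aA _ A'x; have ay := aA _ A'y.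
    have ax' := aA _ A'x'; have ay' := aA _ A'y'.
    have e1 : g (g (a x) (a y)) (tag x y) = g (g (a x') (a y')) (tag x' y').
      by apply: (hi) e; apply: (gA) => //; apply: (gA).
    have [eg etag] := gi _ _ _ _ (gA _ _ ax ay) (tagA x y) (gA _ _ ax' ay') (tagA x' y') e1.
    have [eax eay] := gi _ _ _ _ ax ay ax' ay' eg.
    have sameA : forall u u', A' u -> A' u' -> (A u <-> A u') -> a u = a u' -> u = u'.
      move=> u u' A'u A'u' [uu' u'u]; rewrite /a.
      case: (pselect (A u)) => [Au|nAu].
        by rewrite !asboolT //; apply: uu'.
      have nAu' : ~ A u' by move/u'u.
      rewrite !asboolF // => e'.
      case: A'u => // Bu; case: A'u' => // Bu'.
      by rewrite -(hi'P _ Bu).2 -(hi'P _ Bu').2 e'.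
    have k1k2 := k12; have k1k3 := k13; have k2k3 := k23.
    move: etag; rewrite /tag.
    case: (pselect (A x)) => [Ax|nAx]; case: (pselect (A x')) => [Ax'|nAx'].
    - rewrite (asboolT Ax) (asboolT Ax') => _.
      have nAy : ~ A y by move=> Ay; apply: nxy.
      have nAy' : ~ A y' by move=> Ay'; apply: nxy'.
      by split; [apply: (sameA) | apply: (sameA)] => //; split.
    - rewrite (asboolT Ax) (asboolF nAx').
      by case: (pselect (A y')) => [Ay'|nAy']; [rewrite (asboolT Ay')|rewrite (asboolF nAy')].
    - rewrite (asboolT Ax') (asboolF nAx).
      by case: (pselect (A y)) => [Ay|nAy]; [rewrite (asboolT Ay)|rewrite (asboolF nAy)] => e'; move: k1k2 k1k3; rewrite e'.
    - rewrite (asboolF nAx) (asboolF nAx').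
      case: (pselect (A y)) => [Ay|nAy]; case: (pselect (A y')) => [Ay'|nAy'].
      + rewrite (asboolT Ay) (asboolT Ay') => _.
        by split; [apply: (sameA) | apply: (sameA)] => //; split.
      + by rewrite (asboolT Ay) (asboolF nAy').
      + by rewrite (asboolF nAy) (asboolT Ay') => e'; move: k2k3; rewrite e'.
      + rewrite (asboolF nAy) (asboolF nAy') => _.
        by split; [apply: (sameA) | apply: (sameA)] => //; split.
  have g'i : forall x y x' y', A' x -> A' y -> A' x' -> A' y' ->
     g' x y = g' x' y' -> x = x' /\ y = y'.
    move=> x y x' y' A'x A'y A'x' A'y'; rewrite /g'.
    have hg_notA : forall u v, A' u -> A' v ->
        ~ A (h (g (g (a u) (a v)) (tag u v))).
      move=> u v A'u A'v; apply: (hA); apply: (gA); [apply: (gA)|]; by [apply: (aA)|].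
    case: (pselect (A x /\ A y)) => [[Ax Ay]|nxy];
    case: (pselect (A x' /\ A y')) => [[Ax' Ay']|nxy'].
    - by rewrite !asboolT //; apply: (gi).
    - rewrite asboolT // asboolF // => e; exfalso.
      by apply: (hg_notA x' y') => //; rewrite -e; apply: (gA).
    - rewrite asboolF // asboolT // => e; exfalso.
      by apply: (hg_notA x y) => //; rewrite e; apply: (gA).
    - by rewrite !asboolF //; apply: newi.
  have A'k : A' k1 /\ A' k2 /\ A' k3 by split; [left|split; left].
  pose m' := HObj A'k g'A g'i.
  have Rmm' : R m m'.
    apply/asboolP; split=> /=; first by move=> x Ax; left.
    by move=> x y Ax Ay; rewrite /g' asboolT.
  have /asboolP[/= sub _] := mmax m' Rmm'.
  have : A (h k1) by apply: sub; right; exists k1.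
  exact: hA.
have [//|cAc] := cle_total A (~` A).
have [j [jA ji]] : exists j : K -> K, (forall x, ~ A x -> A (j x)) /\
    inj_on (~` A) j.
  case: cAc => [Ae|[j hj]]; last by exists j.
  exists id; split => x; last by [].
  by move=> nAx; exfalso; have : (~` A) x by []; rewrite Ae.
pose phi x := if `[< A x >] then g x k1 else g (j x) k2.
have phiA : forall x, A (phi x).
  move=> x; rewrite /phi; case: (pselect (A x)) => [Ax|nAx].
    by rewrite asboolT //; apply: (gA).
  by rewrite asboolF //; apply: (gA) => //; apply: (jA).
have phii : forall x y, phi x = phi y -> x = y.
  move=> x y; rewrite /phi.
  case: (pselect (A x)) => [Ax|nAx]; case: (pselect (A y)) => [Ay|nAy].
  - by rewrite (asboolT Ax) (asboolT Ay) => /(gi _ _ _ _ Ax Ak1 Ay Ak1) [].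
  - by rewrite (asboolT Ax) (asboolF nAy) => /(gi _ _ _ _ Ax Ak1 (jA _ nAy) Ak2) [_ /k12].
  - rewrite (asboolF nAx) (asboolT Ay) => /(gi _ _ _ _ (jA _ nAx) Ak2 Ay Ak1) [_ e].
    by case: k12.
  - rewrite (asboolF nAx) (asboolF nAy) => /(gi _ _ _ _ (jA _ nAx) Ak2 (jA _ nAy) Ak2) [e _].
    exact: ji e.
exists (fun x y => g (phi x) (phi y)) => a b c d.
by move=> /(gi _ _ _ _ (phiA a) (phiA b) (phiA c) (phiA d)) [/phii -> /phii ->].
Qed.


Lemma inf_inhabited K : infinite_set [set: K] -> exists k : K, True.
Proof. by move=> /nat_emb [i _]; exists (i 0%N). Qed.

Lemma cle_bigcup K T U (X : set T) (Y : T -> set U) : infinite_set [set: K] ->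
  cle X [set: K] -> (forall x, X x -> cle (Y x) [set: K]) ->
  cle (\bigcup_(x in X) Y x) [set: K].
Proof.
move=> Kinf cX cY; have [p pi] := hessenberg Kinf.
have [k0 _] := inf_inhabited Kinf.
case: (pselect (X = set0)) => [X0|Xn0].
  by left; apply/seteqP; split=> // u [x]; rewrite X0.
have [x0 Xx0] : exists x, X x by apply/set0P/eqP.
case: cX => [X0|[io [_ ioi]]]; first by case: Xn0.
have jx : forall x, {j : U -> K | X x -> inj_on (Y x) j}.
  move=> x; apply: cid; case: (pselect (X x)) => [Xx|nX]; last by exists (fun _ => k0).
  case: (cY x Xx) => [Y0|[j [_ ji]]]; last by exists j.
  by exists (fun _ => k0) => _ u v; rewrite Y0.
pose j x := sval (jx x).
have ji : forall x, X x -> inj_on (Y x) (j x) by move=> x; rewrite /j; case: (jx x).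
have xu : forall u, {x : T | (\bigcup_(x in X) Y x) u -> X x /\ Y x u}.
  move=> u; apply: cid; case: (pselect ((\bigcup_(x in X) Y x) u)) => [[x Xx Yu]|nu].
    by exists x.
  by exists x0.
pose xo u := sval (xu u).
have xoP : forall u, (\bigcup_(x in X) Y x) u -> X (xo u) /\ Y (xo u) u.
  by move=> u; rewrite /xo; case: (xu u).
right; exists (fun u => p (io (xo u)) (j (xo u) u)); split=> // u v Uu Uv.
have [Xu Yu] := xoP u Uu; have [Xv Yv] := xoP v Uv.
move=> /pi [/ioi e1 e2]; have e := e1 Xu Xv; rewrite -e in e2 Yv.
exact: (ji _ Xu) e2.
Qed.

Lemma cle_setU K T (A B : set T) : infinite_set [set: K] ->
  cle A [set: K] -> cle B [set: K] -> cle (A `|` B) [set: K].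
Proof.
move=> Kinf cA cB.
have -> : A `|` B = \bigcup_(b in [set: bool]) (if b then A else B).
  apply/seteqP; split=> [x [Ax|Bx]|x [[] _ h]]; by [exists true|exists false|left|right].
apply: cle_bigcup => //; last by case.
have [i ii] := nat_emb Kinf.
by right; exists (fun b : bool => i b); split=> // [[] []] _ _ /ii.
Qed.

Lemma cle_set1 K T (x : T) : infinite_set [set: K] -> cle [set x] [set: K].
Proof.
move=> /inf_inhabited [k _]; right; exists (fun _ => k); split=> // u v ->; by move=> ->.
Qed.

Lemma cle_nat_bigcup K U (Y : nat -> set U) : infinite_set [set: K] ->
  (forall n, cle (Y n) [set: K]) -> cle (\bigcup_(n in [set: nat]) Y n) [set: K].
Proof.
move=> Kinf cY; apply: cle_bigcup => //.
have [i ii] := nat_emb Kinf.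
by right; exists i; split=> // m n _ _ /ii.
Qed.


Definition setting (K V C I : Type) (lt : I -> I -> Prop) (E : set (set V))
  (f : V -> set C) :=
  infinite_set [set: K] /\ is_succ_card K V /\ ordinal_succ_card K V lt /\ classC E f.


Lemma wf_min I (lt : I -> I -> Prop) (P : I -> Prop) : well_founded lt ->
  (exists x, P x) -> exists x, P x /\ forall y, lt y x -> ~ P y.
Proof.
move=> wf [x Px]; apply: contra_notP (fun h => h) => nm; exfalso.
suff : forall y, ~ P y by move/(_ x).
move=> y; elim/(well_founded_ind wf): y => y IH Py; apply: nm.
by exists y; split=> // z /IH.
Qed.

Lemma VnK K V C I lt E f : @setting K V C I lt E f -> ~ cle [set: V] [set: K].
Proof. by case=> _ [[_ [h _]] _] /cleP. Qed.

Lemma dichoV K V C I lt E f W (S : set W) : @setting K V C I lt E f ->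
  cle S [set: V] -> cle S [set: K] \/ ceq S [set: V].
Proof.
case=> _ [[_ [_ s3]] _] cS.
case: (cS) => [->|[h [_ hi]]]; first by left; left.
case: (s3 (h @` S)) => [/cleP hK|/ceqP hV].
  by left; apply: cle_trans hK; apply: cle_image_inj.
right; split=> //; apply: cle_trans hV.2 _; apply: cle_image.
Qed.

Lemma segK K V C I lt E f i : @setting K V C I lt E f ->
  cle [set j | lt j i] [set: K].
Proof. by case=> _ [_ [[_ [_ hs]] _]]; apply/cleP. Qed.

Lemma IV K V C I lt E f : @setting K V C I lt E f -> ceq [set: I] [set: V].
Proof. by case=> _ [_ [[_ [h _]] _]]; apply/ceqP. Qed.

Lemma InK K V C I lt E f : @setting K V C I lt E f -> ~ cle [set: I] [set: K].
Proof.
move=> H /(cle_trans (IV H).2); exact: VnK H.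
Qed.

Lemma tailK K V C I lt E f a : @setting K V C I lt E f ->
  ~ cle [set b | ~ lt b a] [set: K].
Proof.
move=> H ct; apply: (InK H).
have Kinf : infinite_set [set: K] by case: H.
apply: cle_trans (cle_setU Kinf (segK a H) ct).
by apply: cle_sub => b _; case: (pselect (lt b a)); [left|right].
Qed.

Lemma succ_ex K V C I lt E f a : @setting K V C I lt E f ->
  exists b, is_succ_of lt a b.
Proof.
move=> H; have Kinf : infinite_set [set: K] by case: H.
have [irr [tr [tri wf]]] : strict_wellorder lt by case: H => _ [_ [[]]].
have [b [ab bmin]] : exists b, lt a b /\ forall y, lt y b -> ~ lt a y.
  apply: wf_min => //; apply: contra_notP (InK H) => nex.
  apply: cle_trans (cle_setU Kinf (segK a H) (cle_set1 a Kinf)).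
  apply: cle_sub => b _; case: (tri b a) => [|[->|ab]]; [left|right|] => //.
  by exfalso; apply: nex; exists b.
exists b; split=> // c ac; case: (tri c b) => [cb|[->|bc]]; [|left|right] => //.
by exfalso; exact: bmin cb ac.
Qed.

Lemma succ_unique I (lt : I -> I -> Prop) a b b' : strict_wellorder lt ->
  is_succ_of lt a b -> is_succ_of lt a b' -> b = b'.
Proof.
move=> [irr [tr _]] [ab h] [ab' h'].
case: (h _ ab') => // bb'; case: (h' _ ab) => // b'b.
by exfalso; apply: (irr b); apply: tr bb' b'b.
Qed.

Lemma freshV K V C I lt E f (S : set V) : @setting K V C I lt E f ->
  cle S [set: K] -> exists D, D `<=` ~` S /\ ceq D [set: K].
Proof.
move=> H cS; have Kinf : infinite_set [set: K] by case: H.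
have s1 : cle [set: K] [set: V] by case: H => _ [[/cleP s1 _] _].
have nS : ~ cle (~` S) [set: K].
  move=> cnS; apply: (VnK H); apply: cle_trans (cle_setU Kinf cS cnS).
  by apply: cle_sub => x _; case: (pselect (S x)); [left|right].
have [//|[_ cVS]] := dichoV H (cle_sub (subsetT (~` S))).
have [K0|[h [hS hi]]] := cle_trans s1 cVS.
  by have [k _] := inf_inhabited Kinf; have : [set: K] k by []; rewrite K0.
exists (h @` [set: K]); split; first by move=> _ [k _ <-]; apply: hS.
split; first exact: cle_image.
exact: cle_image_inj.
Qed.

Lemma other_ex V (x : V) (e : set V) :
  exists y : V, (exists y, e y /\ y <> x) -> e y /\ y <> x.
Proof.
case: (pselect (exists y, e y /\ y <> x)) => [[y h]|n]; first by exists y.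
by exists x.
Qed.

Definition other V (x : V) (e : set V) := sval (cid (other_ex x e)).

Lemma otherP V (x : V) (e : set V) :
  (exists y, e y /\ y <> x) -> e (other x e) /\ other x e <> x.
Proof. by rewrite /other; case: (cid _). Qed.

Lemma edge_other V (x : V) e : is_edge e -> e x ->
  e = [set x; other x e] /\ other x e <> x.
Proof.
move=> [a [b [ab ->]]] ex.
have [oe ox] : [set a; b] (other x [set a; b]) /\ other x [set a; b] <> x.
  apply: otherP; case: ex => ->; [exists b|exists a]; split => //; try by [right|left].
  by move=> e0; apply: ab.
split => //; apply/seteqP; split=> z; last by case=> ->.
move: oe ox; set o := other x _ => oe ox.
case: ex => xE; case: oe => oE;
  try (by exfalso; apply: ox; rewrite xE oE);
  by case=> ->; first [by left; rewrite /set1 /= ?xE ?oE | by right; rewrite /set1 /= ?xE ?oE].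

Qed.

Lemma edge_neq V (x y : V) : is_edge [set x; y] -> x <> y.
Proof.
move=> [a [b [ab e]]] xy; subst y; apply: ab.
have : [set x; x] a by rewrite e; left.
have : [set x; x] b by rewrite e; right.
by case=> -> [] ->.
Qed.

Lemma other_pair V (x y : V) : x <> y -> other x [set x; y] = y.
Proof.
move=> xy; have [] := @otherP _ x [set x; y].
  by exists y; split; [right|move=> e; apply: xy].
by case.
Qed.

Lemma inc_leV K V C I lt E f x : @setting K V C I lt E f ->
  cle (inc E x) [set: V].
Proof.
case=> _ [_ [_ [[_ ge] _]]]; right; exists (other x); split=> // e e' [Ee ex] [Ee' e'x] eo.
by rewrite (edge_other (ge _ Ee) ex).1 (edge_other (ge _ Ee') e'x).1 eo.
Qed.

Lemma bigP K V C I lt E f x : @setting K V C I lt E f ->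
  (f x #= [set: V]) <-> ~ cle (f x) [set: K].
Proof.
move=> H; have fV : cle (f x) [set: V].
  by apply: cle_trans (inc_leV x H); case: H => _ [_ [_ [_ /(_ x) /cleP]]].
rewrite ceqP; split.
  by move=> [_ Vf] fK; apply: (VnK H); apply: cle_trans fK.
by move=> nfK; case: (dichoV H fV).
Qed.


Definition nbF V (F : set (set V)) (x : V) := [set y | F [set x; y]].

Lemma pick_ex V (F : set (set V)) (S : set V) (x : V) :
  exists y, (exists y, nbF F x y /\ ~ S y) -> nbF F x y /\ ~ S y.
Proof.
case: (pselect (exists y, nbF F x y /\ ~ S y)) => [[y h]|n]; first by exists y.
by exists x.
Qed.

Definition pickF V (F : set (set V)) (S : set V) (x : V) := sval (cid (pick_ex F S x)).

Lemma pickFP V (F : set (set V)) (S : set V) (x : V) :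
  (exists y, nbF F x y /\ ~ S y) -> nbF F x (pickF F S x) /\ ~ S (pickF F S x).
Proof. by rewrite /pickF; case: (cid _). Qed.

Definition stepF K V C (F : set (set V)) (f : V -> set C) (S T : set V) :=
  T `|` \bigcup_(x in [set x | T x /\ cle (f x) [set: K]]) nbF F x
    `|` pickF F S @` [set x | T x /\ ~ cle (f x) [set: K]].

Definition clF K V C (F : set (set V)) (f : V -> set C) (S T : set V) :=
  \bigcup_(n in [set: nat]) iter n (@stepF K V C F f S) T.

Lemma clF_sub K V C F f S T : T `<=` @clF K V C F f S T.
Proof. by move=> x Tx; exists 0%N. Qed.

Lemma clF_nb K V C F f S T x : @clF K V C F f S T x -> cle (f x) [set: K] ->
  nbF F x `<=` clF K F f S T.
Proof.
move=> [n _ xn] sx y nxy; exists n.+1 => //=.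
by left; right; exists x.
Qed.

Lemma clF_pick K V C F f S T x : @clF K V C F f S T x -> ~ cle (f x) [set: K] ->
  clF K F f S T (pickF F S x).
Proof. by move=> [n _ xn] bx; exists n.+1 => //=; right; exists x. Qed.

Lemma clF_le K V C F f S T : infinite_set [set: K] ->
  (forall x, cle (f x) [set: K] -> cle (nbF F x) [set: K]) ->
  cle T [set: K] -> cle (@clF K V C F f S T) [set: K].
Proof.
move=> Kinf nbK TK; apply: cle_nat_bigcup => // n.
elim: n => [|n IH] //=.
apply: cle_setU => //; first apply: cle_setU => //.
  apply: cle_bigcup => //; last by move=> x [_ /nbK].
  by apply: (cle_trans _ IH); apply: cle_sub => x [].
apply: cle_trans (cle_image _ _) _.
by apply: (cle_trans _ IH); apply: cle_sub => x [].
Qed.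

Definition recC I (lt : I -> I -> Prop) (wf : well_founded lt) V
  (G : set V -> I -> set V) : I -> set V :=
  Fix wf (fun _ => set V) (fun b rec => G (fun v => exists g (h : lt g b), rec g h v) b).

Lemma recCE I (lt : I -> I -> Prop) (wf : well_founded lt) V (G : set V -> I -> set V) b :
  recC wf G b = G (\bigcup_(g in [set g | lt g b]) recC wf G g) b.
Proof.
rewrite /recC Fix_eq; last first.
  move=> x f1 f2 e; congr G.
  by apply/funext => v; apply/propext; split=> [[g [h]]|[g [h]]];
    [rewrite e|rewrite -e]; exists g, h.
congr G; apply/funext => v; apply/propext; split.
  by move=> [g [h r]]; exists g.
by move=> [g h r]; exists g, h.
Qed.

Lemma nbF_sym V (F : set (set V)) x y : nbF F x y -> nbF F y x.
Proof. by rewrite /nbF /= setUC. Qed.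

Lemma nbF_ceq V (E F : set (set V)) x : (forall e, E e -> is_edge e) -> F `<=` E ->
  ceq (nbF F x) (inc F x).
Proof.
move=> ge FE; split.
  right; exists (fun y => [set x; y]); split.
    by move=> y Fy; split => //; left.
  move=> y y' Fy Fy' e.
  have xy := edge_neq (ge _ (FE _ Fy)); have xy' := edge_neq (ge _ (FE _ Fy')).
  by rewrite -(other_pair xy) -(other_pair xy') e.
right; exists (other x); split.
  move=> e [Fe ex]; rewrite /nbF /=.
  by rewrite -(edge_other (ge _ (FE _ Fe)) ex).1.
move=> e e' [Fe ex] [Fe' e'x] eo.
by rewrite (edge_other (ge _ (FE _ Fe)) ex).1 (edge_other (ge _ (FE _ Fe')) e'x).1 eo.
Qed.


Lemma fresh_ex K V (S : set V) :
  exists D : set V, (exists D, D `<=` ~` S /\ ceq D [set: K]) -> D `<=` ~` S /\ ceq D [set: K].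
Proof.
case: (pselect (exists D : set V, D `<=` ~` S /\ ceq D [set: K])) => [[D h]|n].
  by exists D.
by exists set0.
Qed.

Definition freshF K V (S : set V) := sval (cid (@fresh_ex K V S)).

Lemma freshFP K V (S : set V) :
  (exists D, D `<=` ~` S /\ ceq D [set: K]) ->
  freshF K S `<=` ~` S /\ ceq (freshF K S) [set: K].
Proof. by rewrite /freshF; case: (cid _). Qed.

Lemma forward (K V C I : Type) (lt : I -> I -> Prop)
  (E : set (set V)) (f : V -> set C) :
  setting K lt E f ->
  (exists F, perfect_factor [set: V] E f F) ->
  (exists A : I -> set V,
     increasing_continuous lt A /\
     (forall z, is_least lt z -> A z = set0) /\
     (\bigcup_(a in [set: I]) A a = [set: V]) /\
     (forall a b, is_succ_of lt a b -> A b `\` A a #= [set: K]) /\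
     (forall a b, is_succ_of lt a b ->
        let D := A b `\` A a in
        let B := A b `\` (A a `\` [set x | f x #= [set: V]]) in
        exists F, @kperfect_factor V C K B
          [set e | E e /\ exists x y, e = [set x; y] /\ B x /\ D y] f F)).
Proof.
move=> H [F [[FE _] Fp]].
have Kinf : infinite_set [set: K] by case: H.
have [irr [tr [tri wf]]] : strict_wellorder lt by case: H => _ [_ [[]]].
have ge : forall e, E e -> is_edge e by case: H => _ [_ [_ [[_ ge] _]]].
have Fp' : forall x, ceq (inc F x) (f x) by move=> x; apply/ceqP/Fp.
pose small x := cle (f x) [set: K].
have nbc : forall x, ceq (nbF F x) (f x).
  by move=> x; exact: (ceq_trans (nbF_ceq x ge FE) (Fp' x)).
have nbK : forall x, small x -> cle (nbF F x) [set: K].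
  by move=> x sx; apply: (cle_trans _ sx); case: (nbc x).
have nbB : forall x, ~ small x -> ~ cle (nbF F x) [set: K].
  by move=> x bx nK; apply: bx; apply: cle_trans nK; case: (nbc x).
have pickP : forall S x, cle S [set: K] -> ~ small x ->
    nbF F x (pickF F S x) /\ ~ S (pickF F S x).
  move=> S x SK bx; apply: pickFP; apply: contra_notP (nbB x bx) => nex.
  by apply: (cle_trans _ SK); apply: cle_sub => y ny; apply: contra_notP nex => nS; exists y.
have [gI gIi] : exists gI : V -> I, inj_on [set: V] gI.
  have [_ [V0|[g [_ gi]]]] := IV H; last by exists g.
  have [v _] : exists v : V, True by case: H => _ [_ [_ [[[v _] _] _]]]; exists v.
  by have : [set: V] v by []; rewrite V0.
pose G (S : set V) b := clF K F f S (S `|` freshF K S `|` [set x | gI x = b]).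
pose Cf := recC wf G.
pose SS b := \bigcup_(g in [set g | lt g b]) Cf g.
have Ceq : forall b, Cf b = G (SS b) b by move=> b; rewrite /Cf recCE.
have SSK : forall b, cle (SS b) [set: K] /\ cle (Cf b) [set: K].
  move=> b; elim/(well_founded_ind wf): b => b IH.
  have SK : cle (SS b) [set: K].
    by apply: cle_bigcup => //; [apply: (segK b H)|move=> g /IH []].
  split=> //; rewrite Ceq; apply: clF_le => //.
  apply: cle_setU => //; first apply: cle_setU => //.
    by case: (freshFP (freshV H SK)) => _ [].
  apply: cle_trans (cle_set1 b Kinf); right; exists gI; split=> // x y ex ey _.
  by apply: gIi; rewrite // ex ey.
have freshP : forall b, freshF K (SS b) `<=` ~` SS b /\ ceq (freshF K (SS b)) [set: K].
  by move=> b; apply: freshFP; apply: freshV H (SSK b).1.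
have SSC : forall b, SS b `<=` Cf b.
  by move=> b x Sx; rewrite Ceq; apply: clF_sub; left; left.
have frC : forall b, freshF K (SS b) `<=` Cf b.
  by move=> b x Sx; rewrite Ceq; apply: clF_sub; left; right.
have gIC : forall x, Cf (gI x) x.
  by move=> x; rewrite Ceq; apply: clF_sub; right.
have Cnb : forall b x, Cf b x -> small x -> nbF F x `<=` Cf b.
  by move=> b x; rewrite Ceq; apply: clF_nb.
have Cpick : forall b x, Cf b x -> ~ small x ->
    Cf b (pickF F (SS b) x) /\ nbF F x (pickF F (SS b) x) /\ ~ SS b (pickF F (SS b) x).
  move=> b x Cx bx; split; first by move: Cx; rewrite Ceq => Cx; apply: clF_pick.
  by apply: pickP => //; apply: (SSK b).1.
have SSsucc : forall a b, is_succ_of lt a b -> SS b = Cf a.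
  move=> a b [ab ac]; apply/seteqP; split.
    move=> x [g gb Cg]; case: (tri g a) => [ga|[ea|ag]].
      by apply: SSC; exists g.
      by rewrite -ea.
    by exfalso; case: (ac _ ag) => [eb|bg]; apply: (irr g);
      [rewrite {2}eb|apply: tr gb bg].
  by move=> x Cx; exists a.
have smallE : forall y, ~ (f y #= [set: V]) -> small y.
  by move=> y ny; apply: contra_notP ny => nsy; apply/(bigP y H).
exists SS; split; [|split; [|split; [|split]]].
- split.
    by move=> a b ab x [g ga Cg]; exists g => //; exact: tr ga ab.
  move=> l [nl ns]; apply/seteqP; split.
    move=> x [g gl Cg]; have [b gb] := succ_ex g H.
    have bl : lt b l.
      case: (tri b l) => [//|[eb|lb]].
        by exfalso; apply: ns; exists g; rewrite -eb.
      exfalso; case: (gb.2 l gl) => [el|bl']; apply: (irr l).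
        by move: lb; rewrite -el.
      exact: tr lb bl'.
    by exists b => //; exists g => //; case: gb.
  by move=> x [a al [g ga Cg]]; exists g => //; exact: tr ga al.
- move=> z zl; apply/seteqP; split=> // x [g gz _].
  case: (pselect (g = z)) => [e|ne].
    by rewrite e in gz; case: (irr z).
  by apply: (irr g); exact: tr gz (zl g ne).
- apply/seteqP; split=> // x _; have [b bs] := succ_ex (gI x) H.
  by exists b => //; exists (gI x); [case: bs|apply: gIC].
- move=> a b ab; rewrite (SSsucc a b ab); apply/ceqP; split.
    by apply: (cle_trans _ (SSK a).2); apply: cle_sub => x [].
  apply: (cle_trans (freshP a).2.2); apply: cle_sub => x fx; split.
    exact: frC.
  exact: (freshP a).1.
move=> a b ab; rewrite (SSsucc a b ab) /=.
exists [set e | F e /\ (E e /\ exists x y, e = [set x; y] /\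
   (Cf a `\` (SS a `\` [set x | f x #= [set: V]])) x /\ (Cf a `\` SS a) y)].
split.
  split; first by move=> e [].
  move=> x Bx; apply/cleP; apply: (cle_trans _ (Fp' x).1).
  by apply: cle_sub => e [[Fe _] ex].
move=> x [Cx nB]; split.
  move/cleP => sx.
  have nSx : ~ SS a x.
    by move=> Sx; apply: nB; split => //= /(bigP x H); apply.
  suff -> : inc [set e | F e /\ (E e /\ exists x y, e = [set x; y] /\
     (Cf a `\` (SS a `\` [set x | f x #= [set: V]])) x /\ (Cf a `\` SS a) y)] x
     = inc F x by apply: Fp.
  apply/seteqP; split; first by move=> e [[Fe _] ex].
  move=> e [Fe ex]; split => //.
  have [eE oxn] := edge_other (ge _ (FE _ Fe)) ex.
  set y := other x e in eE oxn.
  have nby : nbF F x y by rewrite /nbF /= -eE.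
  have Cy : Cf a y by apply: (Cnb a x Cx sx).
  have By : (Cf a `\` (SS a `\` [set x | f x #= [set: V]])) y.
    split=> // -[[g ga Cg] /smallE sy]; apply: nSx; exists g => //.
    by apply: (Cnb g y Cg sy); apply: nbF_sym.
  split; first exact: Fe.
  split; first exact: FE _ Fe.
  exists y, x; split; first by rewrite eE setUC.
  by split.
move=> bx'; have bx : ~ small x by move/cleP.
have [Cy [ny nSy]] := Cpick a x Cx bx.
exists [set x; pickF F (SS a) x]; split; last by left.
split; first exact: ny.
split; first exact: FE ny.
by exists x, (pickF F (SS a) x); split.
Qed.


Lemma backward (K V C I : Type) (lt : I -> I -> Prop)
  (E : set (set V)) (f : V -> set C) :
  setting K lt E f ->
  (exists A : I -> set V,
     increasing_continuous lt A /\
     (forall z, is_least lt z -> A z = set0) /\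
     (\bigcup_(a in [set: I]) A a = [set: V]) /\
     (forall a b, is_succ_of lt a b -> A b `\` A a #= [set: K]) /\
     (forall a b, is_succ_of lt a b ->
        let D := A b `\` A a in
        let B := A b `\` (A a `\` [set x | f x #= [set: V]]) in
        exists F, @kperfect_factor V C K B
          [set e | E e /\ exists x y, e = [set x; y] /\ B x /\ D y] f F)) ->
  (exists F, perfect_factor [set: V] E f F).
Proof.
move=> H [A [[Ainc Acont] [Aleast [Acov [_ Afac]]]]].
have Kinf : infinite_set [set: K] by case: H.
have [irr [tr [tri wf]]] : strict_wellorder lt by case: H => _ [_ [[]]].
have sx : forall a, {b | is_succ_of lt a b} by move=> a; apply: cid; apply: succ_ex H.
pose s a := sval (sx a).
have sP : forall a, is_succ_of lt a (s a) by move=> a; rewrite /s; case: (sx a).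
pose D a := A (s a) `\` A a.
pose B a := A (s a) `\` (A a `\` [set x | f x #= [set: V]]).
pose Ea a := [set e | E e /\ exists x y, e = [set x; y] /\ B a x /\ D a y].
have Fx : forall a, {Fa | @kperfect_factor V C K (B a) (Ea a) f Fa}.
  by move=> a; apply: cid; apply: (Afac a (s a) (sP a)).
pose Fa a := sval (Fx a).
have FaP : forall a, @kperfect_factor V C K (B a) (Ea a) f (Fa a).
  by move=> a; rewrite /Fa; case: (Fx a).
have f1 : forall a a', lt a a' -> A (s a) `<=` A a'.
  move=> a a' aa'; case: ((sP a).2 _ aa') => [->|lt']; first by [].
  exact: Ainc.
have f2 : forall a e, Ea a e -> e `<=` A (s a) /\ exists2 y, e y & D a y.
  move=> a e [_ [x [y [-> [[Bx _] [Dy nDy]]]]]]; split.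
    by move=> z [->|->].
  by exists y; [right|split].
have f3 : forall a a' e, Ea a e -> Ea a' e -> a = a'.
  move=> a a' e Ee Ee'.
  have [es [y ey [_ Dy]]] := f2 _ _ Ee; have [es' [y' ey' [_ Dy']]] := f2 _ _ Ee'.
  case: (tri a a') => [aa'|[//|a'a]]; exfalso.
    by apply: Dy'; apply: (f1 _ _ aa'); apply: es.
  by apply: Dy; apply: (f1 _ _ a'a); apply: es'.
have f5 : forall a a' x, D a x -> D a' x -> a = a'.
  move=> a a' x [Ax nAx] [Ax' nAx']; case: (tri a a') => [aa'|[//|a'a]]; exfalso.
    by apply: nAx'; apply: (f1 _ _ aa').
  by apply: nAx; apply: (f1 _ _ a'a).
have f4 : forall x, exists a, D a x.
  move=> x; have [m [Amx mmin]] : exists m, A m x /\ forall y, lt y m -> ~ A y x.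
    apply: wf_min => //; have : [set: V] x by [].
    by rewrite -Acov => -[m _ Amx]; exists m.
  have [a am] : exists a, is_succ_of lt a m.
    case: (pselect (exists a, is_succ_of lt a m)) => // nsu; exfalso.
    case: (pselect (is_least lt m)) => [ml|nml].
      by move: Amx; rewrite (Aleast _ ml).
    move: Amx; rewrite (Acont m (conj nml nsu)).
    by move=> [a am Aax]; case: (mmin a am).
  have ems : m = s a by apply: succ_unique am (sP a).
  by exists a; split; [rewrite -ems|apply: mmin; case: am].
pose F := \bigcup_(a in [set: I]) Fa a.
have FE : F `<=` E.
  by move=> e [a _ Fe]; have [[FaE _] _] := FaP a; have [] := FaE _ Fe.
have main : forall x, inc F x #= f x.
  move=> x; have [a Dax] := f4 x.
  have Bax : B a x by case: Dax => Ax nAx; split => // -[].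
  case: (pselect (f x #<= [set: K])) => [sx'|bx].
    have -> : inc F x = inc (Fa a) x.
      apply/seteqP; split; last by move=> e [Fe ex]; split => //; exists a.
      move=> e [[a' _ Fe] ex]; split => //.
      have [[FaE _] _] := FaP a'.
      have [_ [x' [y' [ee [[Bx' nBx'] Dy']]]]] := FaE _ Fe.
      suff <- : a' = a by [].
      move: ex; rewrite ee => -[xx'|xy'].
        apply: (f5 _ _ x) => //; rewrite xx'; split => // Ax'.
        apply: nBx'; split => //; rewrite -xx' => /(bigP x H); apply.
        exact/cleP.
      by apply: (f5 _ _ x) => //; rewrite xy'.
    by have [_ /(_ x Bax) [/(_ sx')]] := FaP a.
  have fV : f x #= [set: V] by apply/(bigP x H) => /cleP.
  have fV' : ceq [set: V] (f x) by apply: ceq_sym; apply/ceqP.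
  apply/ceqP; apply: (ceq_trans _ fV'); split.
    apply: cle_trans (inc_leV x H); apply: cle_sub => e [Fe ex]; split => //.
    exact: FE.
  have : ~ cle (inc F x) [set: K].
    move=> cK; apply: (tailK (a:=a) H); apply: (cle_trans _ cK).
    have ex : forall a', {e | ~ lt a' a -> (Fa a') e /\ e x}.
      move=> a'; apply: cid; case: (pselect (lt a' a)) => [aa|naa].
        by exists set0.
      have Ba' : B a' x.
        split.
          case: (tri a' a) => [//|[->|aa']]; first by case: Dax.
          by apply: (Ainc _ _ (sP a').1); apply: (f1 _ _ aa'); case: Dax.
        by case=> _; apply.
      have [_ /(_ x Ba') [_ /(_ bx) [e [Fe ex]]]] := FaP a'.
      by exists e.
    right; exists (fun a' => sval (ex a')); split.
      move=> a' naa; case: (ex a') => e /= /(_ naa) [Fe ex']; split => //.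
      by exists a'.
    move=> a1 a2 n1 n2; case: (ex a1) => e1 /= /(_ n1) [F1 _].
    case: (ex a2) => e2 /= /(_ n2) [F2 _] e12; subst e2.
    have [[E1 _] _] := FaP a1; have [[E2 _] _] := FaP a2.
    exact: f3 (E1 _ F1) (E2 _ F2).
  move=> nK; have inc_le : cle (inc F x) [set: V].
    apply: cle_trans (inc_leV x H); apply: cle_sub => e [Fe ex]; split => //.
    exact: FE.
  by case: (dichoV H inc_le) => // -[].
exists F; split; last by move=> x _; apply: main.
split=> // x _; have [] := card_eqPle (inc F x) (f x); by move=> /(_ (main x)) [].
Qed.


Theorem theorem3 (K V C I : Type) (lt : I -> I -> Prop)
  (E : set (set V)) (f : V -> set C) :
  infinite_set [set: K] ->
  is_succ_card K V ->
  ordinal_succ_card K V lt ->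
  classC E f ->
  (exists F, perfect_factor [set: V] E f F) <->
  (exists A : I -> set V,
     increasing_continuous lt A /\
     (forall z, is_least lt z -> A z = set0) /\
     (\bigcup_(a in [set: I]) A a = [set: V]) /\
     (forall a b, is_succ_of lt a b -> A b `\` A a #= [set: K]) /\
     (forall a b, is_succ_of lt a b ->
        let D := A b `\` A a in
        let B := A b `\` (A a `\` [set x | f x #= [set: V]]) in
        exists F, @kperfect_factor V C K B
          [set e | E e /\ exists x y, e = [set x; y] /\ B x /\ D y] f F)).
Proof.
move=> h1 h2 h3 h4.
have H : setting K lt E f by split; [|split; [|split]].
by split; [apply: forward|apply: backward].
Qed.
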